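(* Let $N,M\ge 1$ be integers and let $\mathcal H=\mathcal H_+\oplus\mathcal H_-$ with $\mathcal H_+=\mathbb C^N$, $\mathcal H_-=\mathbb C^M$. Let $B$ be a positive semidefinite Hermitian $N\times N$ matrix, $D$ a skew-Hermitian $M\times M$ matrix, and $u$ an $M\times N$ complex matrix that is a partial isometry (i.e. $uu^*u=u$). Let $$\mu=\begin{pmatrix}0 & -Bu^*\\ uB & D\end{pmatrix}.$$ Let $n\ge 1$ and $k$ be integers with $n/2+1<k\le n+1$. Then $$i^{n+1}\big(\mu\, H^{n-1}_{k-1}(\mu)\big)_{--}\,u=0.$$ Consequently, in the system of equations $\frac{\partial}{\partial t^n_k}u=i^{n+1}(\mu H^{n-1}_{k-1}(\mu))_{--}u$, only the times $t^n_k$ with $k\le n/2+1$ give nontrivial evolution.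
   Context: $P_+$ and $P_-$ denote the orthogonal projectors of $\mathcal H$ onto $\mathcal H_+$ and $\mathcal H_-$; for an operator $X$ on $\mathcal H$, $X_{--}$ denotes the block $P_-XP_-$ regarded as an operator on $\mathcal H_-$. For integers $m\ge 0$ and $0\le l\le m+1$ and a matrix $\mu$ on $\mathcal H$, define $$H^m_l(\mu)=\sum_{\substack{i_0,\dots,i_m\in\{0,1\}\\ i_0+\dots+i_m=l}} P_+^{i_0}\mu P_+^{i_1}\mu\cdots\mu P_+^{i_m},$$ with $P_+^0=I$ the identity and $P_+^1=P_+$ (so $H^m_l$ has degree $m$ in $\mu$ and degree $l$ in $P_+$; e.g. $H^0_0=I$, $H^0_1=P_+$). *)

(* Defs.v *)
From HB Require Import structures.
From mathcomp Require Import all_boot all_order all_algebra.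
Set Implicit Arguments. Unset Strict Implicit. Unset Printing Implicit Defensive.
Import Order.TTheory GRing.Theory Num.Theory.
Local Open Scope ring_scope.

Section Defs.
Variable C : numClosedFieldType.

Definition ctr {m n} (A : 'M[C]_(m, n)) : 'M[C]_(n, m) := (map_mx Num.conj A)^T.

Definition hermitian_mx {n} (A : 'M[C]_n) : Prop := ctr A = A.
Definition skew_hermitian_mx {n} (A : 'M[C]_n) : Prop := ctr A = - A.
Definition psd_mx {n} (A : 'M[C]_n) : Prop :=
  hermitian_mx A /\ forall v : 'cV[C]_n, 0 <= (ctr v *m A *m v) 0 0.
Definition partial_isometry {m n} (u : 'M[C]_(m, n)) : Prop :=
  u *m ctr u *m u = u.

Definition mu_mx {N M} (B : 'M[C]_N) (D : 'M[C]_M) (u : 'M[C]_(M, N))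
  : 'M[C]_(N + M) := block_mx 0 (- (B *m ctr u)) (u *m B) D.

Definition Pplus {N M} : 'M[C]_(N + M) := block_mx 1%:M 0 0 0.

Definition Ppow {N M} (b : bool) : 'M[C]_(N + M) := if b then Pplus else 1%:M.

(* H^m_l(mu) = sum over i_0..i_m in {0,1} with i_0+...+i_m = l of
   P^{i_0} mu P^{i_1} mu ... mu P^{i_m} *)
Definition Hml {N M} (m l : nat) (mu : 'M[C]_(N + M)) : 'M[C]_(N + M) :=
  \sum_(i : {ffun 'I_m.+1 -> bool} | (\sum_(j < m.+1) nat_of_bool (i j))%N == l)
     (Ppow (i ord0) *m \big[mulmx/1%:M]_(j < m) (mu *m Ppow (i (lift ord0 j)))).

(* X_{--} = P_- X P_- as an operator on H_- *)
Definition minus_block {N M} (X : 'M[C]_(N + M)) : 'M[C]_M := drsubmx X.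
End Defs.

(* Main.v *)
Require Import Defs.
From HB Require Import structures.
From mathcomp Require Import all_boot all_order all_algebra.
From mathcomp Require Import zify.
Import Order.TTheory GRing.Theory Num.Theory.
Local Open Scope ring_scope.

Section Aux.
Variable C : numClosedFieldType.
Variables N M : nat.
Local Notation MX := 'M[C]_(N + M).

Definition Pminus : MX := block_mx 0 0 0 1%:M.

Definition Tm (m : nat) (mu : MX) (i : {ffun 'I_m.+1 -> bool}) : MX :=
  Ppow C (i ord0) *m \big[mulmx/1%:M]_(j < m) (mu *m Ppow C (i (lift ord0 j))).

Lemma Tm_rec m (mu : MX) (i : {ffun 'I_m.+2 -> bool}) :
  Tm m.+1 mu i = Ppow C (i ord0) *m (mu *m Tm _ mu [ffun j => i (lift ord0 j)]).
Proof.
rewrite /Tm big_ord_recl ffunE !mulmxA; congr (_ *m _).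
by apply: eq_bigr => j _; rewrite ffunE.
Qed.

Lemma cnt_rec m (i : {ffun 'I_m.+2 -> bool}) :
  (\sum_(j < m.+2) nat_of_bool (i j) =
   i ord0 + \sum_(j < m.+1) nat_of_bool ([ffun j => i (lift ord0 j)] j))%N.
Proof. by rewrite big_ord_recl; congr (_ + _)%N; apply: eq_bigr => j _; rewrite ffunE. Qed.

Lemma PPm : Pplus C *m Pminus = 0 :> MX.
Proof. by rewrite /Pplus /Pminus mulmx_block !mulmx0 !mul0mx !addr0 block_mx0. Qed.

Lemma PmuP (B : 'M[C]_N) (D : 'M[C]_M) (u : 'M[C]_(M, N)) :
  Pplus C *m mu_mx B D u *m Pplus C = 0 :> MX.
Proof.
by rewrite /Pplus /mu_mx !mulmx_block ?mulmx0 ?mul0mx ?mulmx1 ?mul1mx ?addr0 block_mx0.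
Qed.

Lemma invariants (mu : MX) (hmu : Pplus C *m mu *m Pplus C = 0) m :
  forall i : {ffun 'I_m.+1 -> bool},
  let c := (\sum_(j < m.+1) nat_of_bool (i j))%N in
  [/\ (m.+2 < 2 * c)%N -> Tm _ mu i = 0,
      (m.+1 < 2 * c)%N -> Tm _ mu i *m Pminus = 0,
      (m.+1 < 2 * c)%N -> Pplus C *m (mu *m Tm _ mu i) = 0 &
      (m.+1 <= 2 * c)%N -> Pplus C *m (mu *m (Tm _ mu i *m Pminus)) = 0].
Proof.
have PmP : Pplus C *m (mu *m Pplus C) = 0 by rewrite mulmxA.
elim: m => [|m IH] i c.
  have hc : (c <= 1)%N by rewrite /c big_ord1; case: (i ord0).
  rewrite /c /Tm big_ord0 mulmx1 big_ord1 /=.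
  case: (i ord0) => /=; last by split => h; lia.
  split => h; try lia.
  - by rewrite PPm.
  - by rewrite !mulmxA hmu.
  - by rewrite !mulmxA hmu mul0mx.
have hc : c = (i ord0 + \sum_(j < m.+1) nat_of_bool ([ffun j => i (lift ord0 j)] j))%N.
  by rewrite /c cnt_rec.
move: (IH [ffun j => i (lift ord0 j)]) => /= [Ha Hb Hc Hd].
rewrite Tm_rec; set T' := Tm m mu _ in Ha Hb Hc Hd *; clearbody T'; move: hc; case: (i ord0) => /= hc.
- have E : forall X : MX, Pplus C *m (mu *m (Pplus C *m X)) = 0.
    by move=> X; rewrite !mulmxA -(mulmxA _ mu) PmP mul0mx.
  split => h.
  + by rewrite Hc //; lia.
  + rewrite -!mulmxA.
    have [h1|h1] := leqP (m.+2) (2 * (c - 1))%N.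
      by rewrite [mu *m (_ *m _)]mulmxA mulmxA Hc ?mul0mx //; lia.
    by rewrite Hd //; lia.
  + by apply: E.
  + by rewrite -mulmxA E.
- rewrite !mul1mx; split => h.
  + by rewrite Ha ?mulmx0 //; lia.
  + by rewrite -mulmxA Hb ?mulmx0 //; lia.
  + by rewrite Ha ?mulmx0 //; lia.
  + by rewrite -mulmxA Hb ?mulmx0 //; lia.
Qed.
End Aux.

Theorem proposition2p2 (C : numClosedFieldType) (N M : nat)
  (hN : (1 <= N)%N) (hM : (1 <= M)%N)
  (B : 'M[C]_N) (D : 'M[C]_M) (u : 'M[C]_(M, N)) :
  psd_mx B -> skew_hermitian_mx D -> partial_isometry u ->
  forall n k : nat, (1 <= n)%N -> (n + 2 < 2 * k)%N -> (k <= n + 1)%N ->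
  ('i ^+ (n + 1) *: minus_block (mu_mx B D u *m Hml (n - 1) (k - 1) (mu_mx B D u)))
    *m u = 0.
Proof.
move=> _ _ _ n k hn hk _.
have drP : forall X : 'M[C]_(N + M), drsubmx (X *m Pminus C N M) = drsubmx X.
  move=> X; rewrite -{1}(submxK X) /Pminus mulmx_block block_mxKdr.
  by rewrite !mulmx0 !mulmx1 !add0r.
suff H0 : Hml (n - 1) (k - 1) (mu_mx B D u) *m Pminus C N M = 0.
  rewrite /minus_block -drP -mulmxA H0 mulmx0.
  by rewrite (_ : drsubmx (0 : 'M[C]_(N + M)) = 0) ?scaler0 ?mul0mx // -block_mx0 block_mxKdr.
rewrite /Hml mulmx_suml big1 // => i /eqP hi.
have [_ Hb _ _] := @invariants C N M _ (@PmuP C N M B D u) _ i.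
by rewrite -/(Tm C N M _ _ i) Hb // hi; lia.
Qed.
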